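(* Let $k\ge3$. For $0\le m\le P_k-1$ let $S_k^{(m)}=\{N:5+mP_{k-1}\#\le N\le 4+(m+1)P_{k-1}\#\}$, and let $\widetilde P^{(m)<}$ and $\widetilde P^{(m)>}$ be the least and greatest integers in $S_k^{(m)}$ that are coprime to $P_k\#$. For $1\le m\le P_k-1$ define the subset gap $g_m=\widetilde P^{(m)<}-\widetilde P^{(m-1)>}$. Then among the $P_k-1$ subset gaps $g_1,\dots,g_{P_k-1}$, exactly $P_k-2$ equal $P_k-1$ and exactly one equals $P_k+1$.
   Context: $P_k$ denotes the $k$-th prime ($P_1=2$) and $P_k\#=\prod_{i=1}^kP_i$. *)

(* Defs.v *)
From mathcomp Require Import all_boot.
Set Implicit Arguments. Unset Strict Implicit. Unset Printing Implicit Defensive.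

Lemma next_prime_ex (m : nat) : exists p, (m < p) && prime p.
Proof. by have [p Hp Pp] := prime_above m; exists p; rewrite Hp Pp. Qed.

Definition next_prime (m : nat) : nat := ex_minn (next_prime_ex m).

(* Pidx i = the (i+1)-th prime (0-based internal index) *)
Fixpoint Pidx (i : nat) : nat :=
  match i with 0 => 2 | i'.+1 => next_prime (Pidx i') end.

(* P k = P_k, the k-th prime, with P 1 = 2 *)
Definition P (k : nat) : nat := Pidx k.-1.

Definition primorial (k : nat) : nat := \prod_(1 <= i < k.+1) P i.

(* elements of S_k^(m) = [5 + m P_{k-1}#, 4 + (m+1) P_{k-1}#] coprime to P_k#,
   in increasing order *)
Definition Scop (k m : nat) : seq nat :=
  [seq N <- iota (5 + m * primorial k.-1) (primorial k.-1) | coprime N (primorial k)].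

Definition Plow (k m : nat) : nat := head 0 (Scop k m).
Definition Phigh (k m : nat) : nat := last 0 (Scop k m).

Definition gap (k m : nat) : nat := Plow k m - Phigh k m.-1.

(* Main.v *)
Require Import Defs.
From mathcomp Require Import all_boot zify.

Lemma next_primeP m : [/\ m < next_prime m, prime (next_prime m) &
  forall n, m < n -> prime n -> next_prime m <= n].
Proof.
rewrite /next_prime; case: ex_minnP => n /andP[H1 H2] H3; split => // x Hx Px.
by apply: H3; rewrite Hx Px.
Qed.

Lemma Pidx_prime i : prime (Pidx i).
Proof. by case: i => [|i] //=; case: (next_primeP (Pidx i)). Qed.

Lemma Pidx_lt i : Pidx i < Pidx i.+1.
Proof. by rewrite /=; case: (next_primeP (Pidx i)). Qed.

Lemma Pidx_mono i j : i < j -> Pidx i < Pidx j.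
Proof.
elim: j => // j IH; rewrite ltnS leq_eqVlt => /orP[/eqP->|/IH h].
  exact: Pidx_lt.
exact: ltn_trans h (Pidx_lt j).
Qed.

Lemma Pidx_all j q : prime q -> q <= Pidx j -> exists i, i <= j /\ q = Pidx i.
Proof.
move=> pq; elim: j => [|j IH] Hq.
  exists 0; split => //; have := prime_gt1 pq; simpl in Hq |- *; lia.
case: (leqP q (Pidx j)) => h.
  by case: (IH h) => i [? ?]; exists i; split => //; lia.
exists j.+1; split => //; apply/eqP; rewrite eqn_leq Hq /=.
by case: (next_primeP (Pidx j)) => _ _ /(_ q h pq).
Qed.

Lemma prod_div_prime j q : prime q -> q %| \prod_(1 <= i < j.+1) P i ->
  exists i, 1 <= i <= j /\ q = P i.
Proof.
move=> pq; elim: j => [|j IH].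
  rewrite big_geq // dvdn1 => /eqP h; rewrite h in pq; by [].
rewrite big_nat_recr //= Euclid_dvdM // => /orP[/IH [i [h1 h2]]|h].
  by exists i; split => //; lia.
exists j.+1; split; first lia. apply/eqP; have pP : prime (P j.+1) by apply: Pidx_prime.
  by rewrite -(dvdn_prime2 pq pP).
Qed.

Lemma P_div_prod j i : 1 <= i <= j -> P i %| \prod_(1 <= i < j.+1) P i.
Proof.
elim: j => [|j IH] hi; first lia.
rewrite big_nat_recr //=; case: (ltnP i j.+1) => h.
  by apply: dvdn_mulr; apply: IH; lia.
have -> : i = j.+1 by lia.
exact: dvdn_mull.
Qed.

Lemma iota_split s n a : s <= a < s + n ->
  iota s n = iota s (a - s) ++ a :: iota a.+1 (n - (a - s)).-1.
Proof.
move=> h; have e : n = (a - s) + ((n - (a - s)).-1).+1 by lia.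
rewrite {1}e iotaD; congr (_ ++ _); have -> : s + (a - s) = a by lia.
by [].
Qed.

Lemma head_filter_iota (T : pred nat) s n a : s <= a < s + n -> T a ->
  (forall x, s <= x < a -> ~~ T x) -> head 0 (filter T (iota s n)) = a.
Proof.
move=> h Ta hx; rewrite (@iota_split s n a h) filter_cat.
rewrite (@eq_in_filter _ _ pred0); last first.
  move=> x; rewrite mem_iota => hx'; apply/negbTE/hx; lia.
by rewrite filter_pred0 /= Ta.
Qed.

Lemma last_filter_iota (T : pred nat) s n a : s <= a < s + n -> T a ->
  (forall x, a < x < s + n -> ~~ T x) -> last 0 (filter T (iota s n)) = a.
Proof.
move=> h Ta hx; rewrite (@iota_split s n a h) filter_cat /= Ta.
rewrite (@eq_in_filter _ _ pred0 (iota a.+1 _)); last first.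
  move=> x; rewrite mem_iota => hx'; apply/negbTE/hx; lia.
by rewrite filter_pred0 last_cat.
Qed.

Lemma notcop q x y : 1 < q -> q %| x -> q %| y -> ~~ coprime x y.
Proof.
move=> q1 hx hy; apply/negP => /eqP g.
have : q %| gcdn x y by rewrite dvdn_gcd hx hy.
by rewrite g dvdn1 => /eqP h; rewrite h in q1.
Qed.

Lemma cop_shift m Q r : coprime (m * Q + r) Q = coprime r Q.
Proof. by rewrite /coprime gcdnC gcdnMDl gcdnC. Qed.

Section Block.
Variables (Q p : nat).
Hypotheses (pp : prime p) (p5 : 5 <= p) (hQ : forall q, prime q -> q < p -> q %| Q)
  (cpQ : ~~ (p %| Q)) (pQ : p <= Q + 1) (Q6 : 6 <= Q).

Lemma two_Q : 2 %| Q. Proof. by apply: hQ => //; lia. Qed.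
Lemma three_Q : 3 %| Q. Proof. by apply: hQ => //; lia. Qed.

Lemma block_low m : ~~ (p %| m) ->
  head 0 [seq N <- iota (5 + m * Q) Q | coprime N (Q * p)] = m * Q + p.
Proof.
move=> hm; apply: head_filter_iota; first lia.
  rewrite coprimeMr cop_shift; apply/andP; split; first by rewrite prime_coprime.
  rewrite coprime_sym prime_coprime // dvdn_addl // Euclid_dvdM //.
  by rewrite negb_or hm cpQ.
move=> x hx; pose r := x - m * Q.
have -> : x = m * Q + r by lia.
have r1 : 1 < r by lia.
apply: (@notcop (pdiv r)); first exact/prime_gt1/pdiv_prime.
  by apply: dvdn_add; [apply: dvdn_mull; apply: hQ; [apply: pdiv_prime|
    apply: leq_ltn_trans (pdiv_leq _) _; lia] | apply: pdiv_dvd].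
apply: dvdn_mulr; apply: hQ; [apply: pdiv_prime|
    apply: leq_ltn_trans (pdiv_leq _) _]; lia.
Qed.

Lemma dvd_hi m d r : d %| Q -> d %| r -> d %| m * Q + Q + r.
Proof. by move=> h1 h2; rewrite !dvdn_add // dvdn_mull. Qed.

Lemma hi_rest m x : m * Q + Q + 1 < x < 5 + m * Q + Q -> ~~ coprime x (Q * p).
Proof.
move=> hx; pose r := x - (m * Q + Q).
have -> : x = m * Q + Q + r by lia.
have : r = 2 \/ r = 3 \/ r = 4 by lia.
case=> [->|[->|->]].
- by apply: (@notcop 2) => //; [apply: dvd_hi; rewrite ?two_Q | apply: dvdn_mulr; apply: two_Q].
- by apply: (@notcop 3) => //; [apply: dvd_hi; rewrite ?three_Q | apply: dvdn_mulr; apply: three_Q].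
- by apply: (@notcop 2) => //; [apply: dvd_hi; rewrite ?two_Q | apply: dvdn_mulr; apply: two_Q].
Qed.

Lemma block_high_good m : ~~ (p %| m * Q + Q + 1) ->
  last 0 [seq N <- iota (5 + m * Q) Q | coprime N (Q * p)] = m * Q + Q + 1.
Proof.
move=> hm; apply: last_filter_iota; first lia.
  rewrite -mulSnr coprimeMr cop_shift coprime1n /= mulSnr.
  by rewrite coprime_sym prime_coprime.
move=> x hx. apply: (@hi_rest m x hx).
Qed.

Lemma block_high_bad m : p %| m * Q + Q + 1 ->
  last 0 [seq N <- iota (5 + m * Q) Q | coprime N (Q * p)] = m * Q + Q.-1.
Proof.
move=> hm; apply: last_filter_iota; first lia.
  rewrite coprimeMr cop_shift coprimePn ?(leq_trans _ Q6) //=.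
  rewrite coprime_sym prime_coprime //; apply/negP => h.
  have : p %| 2.
    by rewrite -(dvdn_addr _ h); have -> : m * Q + Q.-1 + 2 = m * Q + Q + 1 by lia.
  move/(dvdn_leq (isT : 0 < 2)); lia.
move=> x hx; case: (ltnP (m * Q + Q + 1) x) => h; first by apply: (@hi_rest m); lia.
have : x = m * Q + Q \/ x = m * Q + Q + 1 by lia.
case=> ->.
  by apply: (@notcop 2) => //; [rewrite dvdn_add ?dvdn_mull // two_Q | apply: dvdn_mulr; apply: two_Q].
by apply: (@notcop p) => //; [apply: prime_gt1 | apply: dvdn_mull].
Qed.
End Block.

Lemma count_one (B : pred nat) p Q : prime p -> 5 <= p -> ~~ (p %| Q) -> 0 < Q ->
  (forall m, 1 <= m -> B m = (p %| m * Q + 1)) ->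
  count B (iota 1 p.-1) = 1.
Proof.
move=> pp p5 cpQ Q0 hB.
have cQp : coprime Q p by rewrite coprime_sym prime_coprime.
case: (egcdnP p Q0) => km kn e _; move: cQp e; rewrite /coprime => /eqP -> e.
pose t := ((p - 1) * km) %% p.
have ht : p %| t * Q + 1.
  rewrite /dvdn -modnDml /t modnMml modnDml -mulnA e.
  have -> : (p - 1) * (kn * p + 1) + 1 = ((p - 1) * kn + 1) * p by rewrite mulnDr muln1 mulnDl mul1n mulnA; lia.
  by rewrite modnMl.
have t0 : 0 < t.
  case: (posnP t) ht => [->|//]; rewrite mul0n add0n dvdn1 => /eqP h; lia.
have tp : t < p by rewrite ltn_mod; lia.
have key : forall a b, a < b < p -> p %| a * Q + 1 -> p %| b * Q + 1 -> False.
  move=> a b hab ha hb.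
  have : p %| (b - a) * Q.
    have le : a * Q <= b * Q by rewrite leq_mul2r; apply/orP; right; lia.
    rewrite -(dvdn_addl _ ha); have -> : (b - a) * Q + (a * Q + 1) = b * Q + 1.
      by rewrite mulnBl; lia.
    exact: hb.
  rewrite Euclid_dvdM // (negbTE cpQ) orbF => /dvdn_leq; lia.
rewrite (@eq_in_count _ _ (pred1 t)); last first.
  move=> m; rewrite mem_iota => hm /=; rewrite hB; last lia.
  apply/idP/eqP => [hm'|->] //.
  case: (ltngtP m t) => // h; first by case: (key m t) => //; lia.
  by case: (key t m) => //; lia.
rewrite count_uniq_mem ?iota_uniq //.
have -> : t \in iota 1 p.-1 by rewrite mem_iota; apply/andP; split; lia.
by [].
Qed.

Theorem lemma9 (k : nat) (hk : 3 <= k) :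
  count (fun m => gap k m == (P k).-1) (iota 1 (P k).-1) = (P k - 2)%N /\
  count (fun m => gap k m == (P k).+1) (iota 1 (P k).-1) = 1%N.
Proof.
set p := P k; set Q := primorial k.-1.
have hQd : Q = \prod_(1 <= i < k.-1.+1) P i by [].
have hprim : primorial k = Q * p.
  by rewrite /primorial hQd prednK ?big_nat_recr //; lia.
have pp : prime p by apply: Pidx_prime.
have pe : p = Pidx k.-1 by [].
have hQ : forall q, prime q -> q < p -> q %| Q.
  move=> q pq qp; case: (Pidx_all k.-1 q pq (ltnW qp)) => i [hi ei].
  have ik : i < k.-1.
    rewrite ltn_neqAle hi andbT; apply/negP => /eqP ei'.
    by move: qp; rewrite ei ei' -pe ltnn.
  rewrite ei hQd; have -> : Pidx i = P i.+1 by [].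
  by apply: P_div_prod; lia.
have cpQ : ~~ (p %| Q).
  apply/negP; rewrite hQd => /(prod_div_prime k.-1 p pp) [i [hi ei]].
  have : P i < p by rewrite /P pe; apply: Pidx_mono; lia.
  by rewrite -ei ltnn.
have p5 : 5 <= p.
  have h2 : Pidx 2 <= p.
    rewrite pe; case: (ltngtP 2 k.-1) => h; [exact/ltnW/Pidx_mono | lia | by rewrite h].
  have h1 : 2 < Pidx 2 by apply: (@Pidx_mono 0 2).
  have h4 : Pidx 2 != 4.
    by apply/negP => /eqP e; have := Pidx_prime 2; rewrite e.
  have h3 : Pidx 1 < Pidx 2 by apply: Pidx_mono.
  have h0 : 2 < Pidx 1 by apply: (@Pidx_mono 0 1).
  lia.
have Q0 : 0 < Q by case: (posnP Q) cpQ => [->|//]; rewrite dvdn0.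
have Q6 : 6 <= Q.
  have := hQ 2 isT ltac:(lia); have := hQ 3 isT ltac:(lia); lia.
have pQ : p <= Q + 1.
  have pr : prime (pdiv (Q + 1)) by apply: pdiv_prime; lia.
  case: (ltnP (pdiv (Q + 1)) p) => h; last by apply: leq_trans h (pdiv_leq _); lia.
  have d1 : pdiv (Q + 1) %| Q := hQ _ pr h.
  have := pdiv_dvd (Q + 1); rewrite (dvdn_addr _ d1) dvdn1 => /eqP e.
  by rewrite e in pr.
have hgap : forall m, m \in iota 1 p.-1 ->
    gap k m = if p %| m * Q + 1 then p.+1 else p.-1.
  move=> m; rewrite mem_iota => hm.
  case: m hm => [|m] hm; first lia.
  rewrite /gap /Plow /Phigh /Scop hprim -/Q /=.
  rewrite (block_low Q p pp p5 hQ cpQ pQ Q6 m.+1); last first.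
    apply/negP => /dvdn_leq; lia.
  have e : m.+1 * Q + 1 = m * Q + Q + 1 by rewrite mulSnr.
  rewrite e; case: ifP => h.
    rewrite (block_high_bad Q p pp p5 hQ cpQ pQ Q6 m h); rewrite mulSnr; lia.
  rewrite (block_high_good Q p pp p5 hQ cpQ pQ Q6 m (negbT h)); rewrite mulSnr; lia.
have c1 : count (fun m => p %| m * Q + 1) (iota 1 p.-1) = 1.
  by apply: (@count_one _ p Q pp).
split.
  rewrite (@eq_in_count _ _ (predC (fun m => p %| m * Q + 1))); last first.
    move=> m /hgap -> /=; case: ifP => _ /=; last by rewrite eqxx.
    by apply/eqP; lia.
  have := count_predC (fun m => p %| m * Q + 1) (iota 1 p.-1).
  rewrite c1 size_iota => h; apply/eqP; rewrite -(eqn_add2l 1) h; apply/eqP; lia.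
rewrite -[RHS]c1; apply: eq_in_count => m /hgap -> /=; case: ifP => _ /=; first by rewrite eqxx.
by apply/eqP; lia.
Qed.
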